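(* For all $n\ge 1$, $|F_n(321,14253)|=2^n-\binom{n}{2}-1$.
   Context: A permutation $\pi$ avoids a classical pattern $p\in S_k$ if no subsequence of $\pi$ of length $k$ is order-isomorphic to $p$. A Fishburn permutation is a permutation $\pi=\pi_1\cdots\pi_n$ of $[n]$ for which there are no indices $i<j$ with $\pi_j<\pi_i<\pi_{i+1}$ and $\pi_i=\pi_j+1$. $F_n(\sigma_1,\dots,\sigma_k)$ denotes the set of Fishburn permutations of length $n$ avoiding each of the classical patterns $\sigma_1,\dots,\sigma_k$. *)

(* Defs.v *)
From mathcomp Require Import all_boot all_order all_fingroup.
Set Implicit Arguments. Unset Strict Implicit. Unset Printing Implicit Defensive.

(* Permutations of [n] are represented as elements of {perm 'I_n}
   (values 0..n-1 instead of 1..n; this shift is order-preserving). *)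

Definition pval n (s : {perm 'I_n}) (i : 'I_n) : nat := val (s i).

Definition contains_pattern n (s : {perm 'I_n}) (p : seq nat) : bool :=
  [exists f : {ffun 'I_(size p) -> 'I_n},
     [forall a : 'I_(size p), forall b : 'I_(size p),
        ((a < b)%N ==> (f a < f b)%N) &&
        ((pval s (f a) < pval s (f b))%N == (nth 0 p a < nth 0 p b)%N)]].

Definition avoids n (s : {perm 'I_n}) (p : seq nat) : bool :=
  ~~ contains_pattern s p.

Definition fishburn n (s : {perm 'I_n}) : bool :=
  [forall i : 'I_n, forall j : 'I_n,
     ~~ [&& (i < j)%N, (i.+1 < n)%N,
            (pval s j < pval s i)%N,
            (pval s i < nth 0 [seq pval s k | k <- enum 'I_n] i.+1)%N
          & pval s i == (pval s j).+1]].

Definition Fset n (pats : seq (seq nat)) : {set {perm 'I_n}} :=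
  [set s : {perm 'I_n} | fishburn s && all (avoids s) pats].

(* Main.v *)
Require Import Defs.
From mathcomp Require Import all_boot all_order all_fingroup zify.
Set Implicit Arguments. Unset Strict Implicit. Unset Printing Implicit Defensive.

Definition pf n (s : {perm 'I_n}) (i : nat) : nat :=
  nth 0 [seq Defs.pval s k | k <- enum 'I_n] i.

Lemma pfE n (s : {perm 'I_n}) (i : 'I_n) : pf s i = val (s i).
Proof. by rewrite /pf (nth_map i) ?size_enum_ord // nth_ord_enum. Qed.

Lemma pf_lt n (s : {perm 'I_n}) i : i < n -> pf s i < n.
Proof. move=> Hi; have -> : i = nat_of_ord (Ordinal Hi) by []. rewrite pfE; exact: ltn_ord. Qed.

Lemma pf_inj n (s : {perm 'I_n}) i k : i < n -> k < n -> pf s i = pf s k -> i = k.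
Proof.
move=> Hi Hk; have -> : i = nat_of_ord (Ordinal Hi) by []. have -> : k = nat_of_ord (Ordinal Hk) by [].
rewrite !pfE.
by move/val_inj/perm_inj => ->.
Qed.

Lemma pf_surj n (s : {perm 'I_n}) x : x < n -> exists2 i, i < n & pf s i = x.
Proof.
move=> Hx; exists (nat_of_ord ((s^-1)%g (Ordinal Hx))) => //.
by rewrite pfE permKV.
Qed.

Lemma containsP n (s : {perm 'I_n}) p :
  contains_pattern s p <->
  exists g : nat -> nat, [/\ forall a b, a < b -> b < size p -> g a < g b,
     forall a, a < size p -> g a < n &
     forall a b, a < size p -> b < size p ->
        (pf s (g a) < pf s (g b)) = (nth 0 p a < nth 0 p b)].
Proof.
split.
  move/existsP=> [f /forallP H].
  exists (fun a => if a < size p =P true is ReflectT Ha then val (f (Ordinal Ha)) else 0).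
  split.
  - move=> a b Hab Hb.
    have Ha : a < size p by apply: ltn_trans Hb.
    case: eqP => // Ha'; case: eqP => // Hb'.
    by have /andP[/implyP Hi _] := forallP (H (Ordinal Ha')) (Ordinal Hb'); apply: Hi.
  - by move=> a Ha; case: eqP => [Ha'|/(_ Ha)//]; apply: ltn_ord.
  - move=> a b Ha Hb; case: eqP => // Ha'; case: eqP => // Hb'.
    have /andP[_ /eqP E] := forallP (H (Ordinal Ha')) (Ordinal Hb').
    by rewrite !pfE.
move=> [g [H1 H2 H3]].
apply/existsP; exists [ffun a : 'I_(size p) => Ordinal (H2 a (ltn_ord a))].
apply/forallP=> a; apply/forallP=> b; rewrite !ffunE /=.
apply/andP; split.
  by apply/implyP => Hab; apply: H1.
rewrite /Defs.pval -!pfE /=; apply/eqP; exact: H3.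
Qed.

Definition c321 (q : nat -> nat) n :=
  exists i j k, [/\ i < j, j < k, k < n, q k < q j & q j < q i].
Definition c14253 (q : nat -> nat) n :=
  exists i1 i2 i3 i4 i5, [/\ i1 < i2, i2 < i3, i3 < i4, i4 < i5 & i5 < n] /\
    [/\ q i1 < q i3, q i3 < q i5, q i5 < q i2 & q i2 < q i4].
Definition fishf (q : nat -> nat) n :=
  forall i j, i < j -> j < n -> i.+1 < n ->
    ~ [/\ q j < q i, q i < q i.+1 & q i = (q j).+1].
Definition good q n := [/\ ~ c321 q n, ~ c14253 q n & fishf q n].

Lemma c321P n (s : {perm 'I_n}) : contains_pattern s [:: 3;2;1] <-> c321 (pf s) n.
Proof.
rewrite containsP; split.
  move=> [g [H1 H2 H3]]; exists (g 0), (g 1), (g 2); split.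
  - exact: H1.
  - exact: H1.
  - exact: H2.
  - by rewrite H3.
  - by rewrite H3.
move=> [i [j [k [Hij Hjk Hk Hkj Hji]]]].
exists (fun a => nth 0 [:: i; j; k] a); split.
- move=> a b; case: a => [|[|[|a]]]; case: b => [|[|[|b]]] //= _ _; lia.
- move=> a; case: a => [|[|[|a]]] //= _; lia.
- move=> a b; case: a => [|[|[|a]]]; case: b => [|[|[|b]]] //= _ _; lia.
Qed.

Lemma c14253P n (s : {perm 'I_n}) :
  contains_pattern s [:: 1;4;2;5;3] <-> c14253 (pf s) n.
Proof.
rewrite containsP; split.
  move=> [g [H1 H2 H3]]; exists (g 0), (g 1), (g 2), (g 3), (g 4); split; split.
  - exact: H1.
  - exact: H1.
  - exact: H1.
  - exact: H1.
  - exact: H2.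
  - by rewrite H3.
  - by rewrite H3.
  - by rewrite H3.
  - by rewrite H3.
move=> [i1 [i2 [i3 [i4 [i5 [[H12 H23 H34 H45 H5] [K13 K35 K52 K24]]]]]]].
exists (fun a => nth 0 [:: i1; i2; i3; i4; i5] a); split.
- move=> a b; case: a => [|[|[|[|[|a]]]]]; case: b => [|[|[|[|[|b]]]]] //= _ _; lia.
- move=> a; case: a => [|[|[|[|[|a]]]]] //= _; lia.
- move=> a b; case: a => [|[|[|[|[|a]]]]]; case: b => [|[|[|[|[|b]]]]] //= _ _; lia.
Qed.

Lemma fishP n (s : {perm 'I_n}) : fishburn s <-> fishf (pf s) n.
Proof.
split.
  move=> /forallP H i j Hij Hj Hi1 [K1 K2 K3].
  have Hi : i < n by lia.
  have := forallP (H (Ordinal Hi)) (Ordinal Hj).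
  rewrite /Defs.pval -!pfE /= Hij Hi1 /=.
  have K2' : pf s i < nth 0 [seq nat_of_ord (s k) | k <- enum 'I_n] i.+1 := K2.
  by rewrite K1 K2' K3 eqxx.
move=> H; apply/forallP => i; apply/forallP => j.
rewrite /Defs.pval -!pfE; apply/negP => /and5P [Hij Hi1 K1 K2 /eqP K3].
by apply: (H i j Hij (ltn_ord j) Hi1).
Qed.

Lemma FsetP n (s : {perm 'I_n}) :
  (s \in Fset n [:: [:: 3; 2; 1]; [:: 1; 4; 2; 5; 3]]) <-> good (pf s) n.
Proof.
rewrite inE /= /avoids andbT; split.
  move=> /and3P [Hf /negP H1 /negP H2]; split.
  - by move/c321P.
  - by move/c14253P.
  - by apply/fishP.
move=> [H1 H2 H3]; apply/and3P; split.
- by apply/fishP.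
- by apply/negP => /c321P.
- by apply/negP => /c14253P.
Qed.

Lemma pf_lift n (s : 'S_n) (v : 'I_n.+1) i : i < n ->
  pf (lift_perm ord_max v s) i = if v <= pf s i then (pf s i).+1 else pf s i.
Proof.
move=> Hi; have E2 : pf s i = val (s (Ordinal Hi)) := pfE s (Ordinal Hi).
have E : i = nat_of_ord (lift ord_max (Ordinal Hi)) by rewrite lift_max.
rewrite E2 {1}E pfE lift_perm_lift /= /bump.
by case: leqP; rewrite ?add1n ?add0n.
Qed.

Lemma pf_lift_n n (s : 'S_n) (v : 'I_n.+1) : pf (lift_perm ord_max v s) n = v.
Proof.
have := pfE (lift_perm ord_max v s) ord_max.
by rewrite lift_perm_id.
Qed.

Section Append.
Variables (n v : nat) (p q : nat -> nat).
Hypothesis Hp : forall i, i < n -> p i = if v <= q i then (q i).+1 else q i.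
Hypothesis Hpn : p n = v.
Hypothesis Hq : forall i, i < n -> q i < n.
Hypothesis Hqinj : forall i k, i < n -> k < n -> q i = q k -> i = k.
Hypothesis Hv1 : n.-1 <= v.
Hypothesis Hv2 : v <= n.

Lemma appP1 i k : i < n -> k < n -> (p i < p k) = (q i < q k).
Proof. move=> Hi Hk; rewrite !Hp //; case: (leqP v (q i)); case: (leqP v (q k)) => ? ?; apply/idP/idP; lia. Qed.

Lemma app_le i : i <= n -> p i <= n.
Proof.
rewrite leq_eqVlt => /orP [/eqP -> | Hi]; first by rewrite Hpn; lia.
have := Hq Hi; rewrite Hp //; case: (leqP v (q i)); lia.
Qed.

Lemma app_good : good p n.+1 <-> good q n.
Proof.
split.
  move=> [H1 H2 H3]; split.
  - move=> [i [j [k [Hij Hjk Hk Hkj Hji]]]]; apply: H1.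
    exists i, j, k; split => //; try lia; by rewrite appP1 //; lia.
  - move=> [i1 [i2 [i3 [i4 [i5 [[H12 H23 H34 H45 H5] [K13 K35 K52 K24]]]]]]].
    apply: H2; exists i1, i2, i3, i4, i5; split; split; try lia;
    by rewrite appP1 //; lia.
  - move=> i j Hij Hj Hi1 [K1 K2 K3].
    have Hqi1 := Hq Hi1.
    apply: (H3 i j Hij _ _); try lia.
    have Ei : p i = q i by rewrite Hp; [case: leqP => //; lia | lia].
    have Ej : p j = q j by rewrite Hp; [case: leqP => //; lia | lia].
    split; first by rewrite Ei Ej.
    - by rewrite appP1 //; lia.
    - by rewrite Ei Ej.
move=> [H1 H2 H3]; split.
- move=> [i [j [k [Hij Hjk Hk Hkj Hji]]]].
  have Hi := app_le (i:=i); have Hj := app_le (i:=j).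
  have Hkn : k < n.
    rewrite ltn_neqAle -ltnS Hk andbT; apply/eqP => Ek; subst k.
    rewrite Hpn in Hkj. have := Hi ltac:(lia). lia.
  apply: H1; exists i, j, k; split => //; rewrite -appP1 //; lia.
- move=> [i1 [i2 [i3 [i4 [i5 [[H12 H23 H34 H45 H5] [K13 K35 K52 K24]]]]]]].
  have Hi4 := app_le (i:=i4).
  have Hkn : i5 < n.
    rewrite ltn_neqAle -ltnS H5 andbT; apply/eqP => Ek; subst i5.
    rewrite Hpn in K35 K52. have := Hi4 ltac:(lia). lia.
  apply: H2; exists i1, i2, i3, i4, i5; split; split; try lia;
  by rewrite -appP1 //; lia.
- move=> i j Hij Hj Hi1 [K1 K2 K3].
  have Hi1' := app_le (i:=i.+1).
  have Hjn : j < n.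
    rewrite ltn_neqAle -ltnS Hj andbT; apply/eqP => Ej; subst j.
    rewrite Hpn in K1 K3. have := Hi1' ltac:(lia). lia.
  have Hin : i.+1 < n by lia.
  apply: (H3 i j Hij Hjn Hin); split.
  - by rewrite -appP1 //; lia.
  - by rewrite -appP1 //; lia.
  - move: K3; rewrite !Hp //; try lia.
    have Hqij : q i != q j by apply/eqP => /Hqinj; lia.
    move: Hqij; case: (leqP v (q i)); case: (leqP v (q j)) => ? ? /eqP; lia.
Qed.
End Append.

Lemma lift_perm_inj n (i j : 'I_n.+1) : injective (lift_perm i j).
Proof.
move=> s t E; apply/permP => k.
have := congr1 (fun u : 'S_n.+1 => u (lift i k)) E; rewrite /= !lift_perm_lift.
exact: lift_inj.
Qed.

Lemma lift_perm_surj n (s : 'S_n.+1) i : exists t : 'S_n, s = lift_perm i (s i) t.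
Proof.
pose f (k : 'I_n) := if unlift (s i) (s (lift i k)) is Some k' then k' else k.
have Hf k : lift (s i) (f k) = s (lift i k).
  rewrite /f; case: unliftP => [k' -> //|].
  by move/perm_inj => /eqP; rewrite eq_sym (negbTE (neq_lift _ _)).
have finj : injective f.
  by move=> k1 k2 E; apply: (@lift_inj _ i); apply: (@perm_inj _ s); rewrite -!Hf E.
exists (perm finj); apply/permP => x.
case: (unliftP i x) => [k ->|->]; last by rewrite lift_perm_id.
by rewrite lift_perm_lift permE Hf.
Qed.

Lemma card_fiber n (P : pred 'S_n.+1) (i v : 'I_n.+1) :
  #|[set s | P s & s i == v]| = #|[set t : 'S_n | P (lift_perm i v t)]|.
Proof.
rewrite -(card_imset _ (@lift_perm_inj n i v)); apply: eq_card => s.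
rewrite inE; apply/andP/imsetP.
  move=> [Ps /eqP Hv]; have [t Et] := lift_perm_surj s i.
  by exists t; rewrite ?inE -Hv -Et.
by move=> [t]; rewrite inE => Pt ->; rewrite lift_perm_id eqxx.
Qed.

Notation FF n := (Fset n [:: [:: 3; 2; 1]; [:: 1; 4; 2; 5; 3]]).

Lemma lift_good n (t : 'S_n) (v : 'I_n.+1) : n.-1 <= v ->
  (lift_perm ord_max v t \in FF n.+1) = (t \in FF n).
Proof.
move=> Hv; apply/idP/idP => /FsetP H; apply/FsetP.
  apply/(@app_good n v (pf (lift_perm ord_max v t))) => //.
  - by move=> i Hi; rewrite pf_lift.
  - by rewrite pf_lift_n.
  - exact: pf_lt.
  - exact: pf_inj.
  - by rewrite -ltnS ltn_ord.
apply/(@app_good n v _ (pf t)) => //.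
- by move=> i Hi; rewrite pf_lift.
- by rewrite pf_lift_n.
- exact: pf_lt.
- exact: pf_inj.
- by rewrite -ltnS ltn_ord.
Qed.

Section Struct.
Variables (N v : nat) (p : nat -> nat).
Hypothesis Hlt : forall i, i < N -> p i < N.
Hypothesis Hinj : forall i k, i < N -> k < N -> p i = p k -> i = k.
Hypothesis Hsurj : forall x, x < N -> exists2 i, i < N & p i = x.
Hypothesis Hgood : good p N.
Hypothesis Hlast : p N.-1 = v.
Hypothesis Hv : v.+2 < N.

Lemma pneq i k : i < N -> k < N -> i != k -> p i != p k.
Proof. by move=> Hi Hk Hik; apply/eqP => /Hinj E; rewrite E ?eqxx in Hik. Qed.

Lemma S6 i k : i < k -> k < N -> v < p i -> v < p k -> p i < p k.
Proof.
move=> Hik Hk Hi1 Hk1.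
have HkN : k < N.-1.
  rewrite ltn_neqAle -ltnS (ltn_predK Hk) Hk andbT.
  by apply/eqP => E; rewrite E Hlast ltnn in Hk1.
have : p i != p k by apply: pneq; lia.
rewrite neq_ltn => /orP [//|Hki].
case: Hgood => H1 _ _; case: H1; exists i, k, N.-1; rewrite Hlast; split => //; lia.
Qed.

Lemma posv1 : exists2 r, r < N & p r = v.+1.
Proof. apply: Hsurj; lia. Qed.

Lemma F2 r : r < N -> p r = v.+1 -> r.+1 < N /\ p r.+1 < v.
Proof.
move=> Hr Hpr.
have HrN : r < N.-1.
  rewrite ltn_neqAle -ltnS (ltn_predK Hr) Hr andbT.
  by apply/eqP => E; rewrite E Hlast in Hpr; lia.
have Hr1 : r.+1 < N by lia.
split => //.
case: Hgood => _ _ Hf.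
have := Hf r N.-1 HrN ltac:(lia) Hr1.
rewrite Hlast Hpr => Hn.
have Hle : p r.+1 <= v.+1.
  rewrite leqNgt; apply/negP => Hgt; apply: Hn; split => //.
have Hne : p r.+1 != v.+1 by rewrite -Hpr; apply: pneq => //; lia.
have Hne2 : p r.+1 != v.
  apply/eqP => E.
  have E2 : r.+1 = N.-1 by apply: Hinj; [lia | lia | rewrite Hlast].
  have [a Ha Hpa] : exists2 a, a < N & p a = v.+2 by apply: Hsurj.
  have Har : a < r.
    have Ha1 : a < N.-1.
      rewrite ltn_neqAle -ltnS (ltn_predK Ha) Ha andbT.
      by apply/eqP => E3; rewrite E3 Hlast in Hpa; lia.
    have Ha2 : a != r by apply/eqP => E3; rewrite E3 Hpr in Hpa; lia.
    lia.
  have := S6 Har Hr; rewrite Hpa Hpr; lia.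
lia.
Qed.

Lemma F3 r : r < N -> p r = v.+1 -> r = 0.
Proof.
move=> Hr Hpr; have [Hr1 Hz] := F2 Hr Hpr.
case: (posnP r) => // Hr0; exfalso.
have Hbefore i : i < r -> p i < v.
  move=> Hir.
  have HrN : r < N.-1.
    rewrite ltn_neqAle -ltnS (ltn_predK Hr) Hr andbT.
    by apply/eqP => E; rewrite E Hlast in Hpr; lia.
  case: (leqP (p i) v) => Hpi.
    rewrite ltn_neqAle Hpi andbT -Hlast; apply: pneq; lia.
  have := S6 Hir Hr Hpi; rewrite Hpr; lia.
pose P x := [exists i : 'I_N, (i < r) && (p i == x)].
have exP : exists x, P x.
  exists (p 0); apply/existsP; exists (Ordinal (ltn_trans Hr0 Hr)); by rewrite /= Hr0 eqxx.
case: (ex_minnP exP) => m /existsP [[i0 Hi0] /= /andP [Hi0r /eqP Hpi0]] Hmin.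
have [b Hb Hpb] : exists2 b, b < N & p b = N.-1 by apply: Hsurj; lia.
have Hbr : r < b.
  case: (ltngtP r b) => // Hbr.
    have := S6 Hbr Hr; rewrite Hpr Hpb; lia.
  by move: Hpb; rewrite -Hbr Hpr; lia.
have Hbr1 : r.+1 < b.
  rewrite ltn_neqAle Hbr andbT; apply/eqP => E; rewrite -E in Hpb; lia.
have HbN : b < N.-1.
  rewrite ltn_neqAle -ltnS (ltn_predK Hb) Hb andbT.
  by apply/eqP => E; rewrite E Hlast in Hpb; lia.
case: (ltngtP m (p r.+1)) => Hmz.
- case: Hgood => _ H2 _; apply: H2.
  exists i0, r, r.+1, b, N.-1; split; split; try lia.
- (* m > z : Fishburn violation at i0 with m-1 *)
  have Hmlt : m < N by rewrite -Hpi0; apply: Hlt; lia.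
  have [c Hc Hpc] : exists2 c, c < N & p c = m.-1 by apply: Hsurj; lia.
  have Hci : i0 < c.
    case: (ltnP c r) => Hcr.
      have : P m.-1 by apply/existsP; exists (Ordinal Hc); rewrite /= Hcr Hpc eqxx.
      move/Hmin; have := Hbefore i0 Hi0r; lia.
    rewrite ltn_neqAle (leq_trans _ Hcr) ?andbT; last lia.
    apply/eqP => E; rewrite -E in Hpc; lia.
  case: Hgood => _ _ Hf.
  apply: (Hf i0 c Hci Hc ltac:(lia)); split; try lia.
  case: (ltngtP i0.+1 r) => Hi1.
  + have : P (p i0.+1) by apply/existsP; exists (Ordinal (ltn_trans Hi1 Hr)); rewrite /= Hi1 eqxx.
    move/Hmin => Hle; rewrite ltn_neqAle Hpi0 Hle andbT -Hpi0.
    by apply: pneq; lia.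
  + lia.
  + rewrite Hi1 Hpr Hpi0; have := Hbefore i0 Hi0r; lia.
- have : i0 = r.+1 by apply: Hinj; lia.
  lia.
Qed.

Lemma S1 : p 0 = v.+1.
Proof. have [r Hr Hpr] := posv1; by rewrite -(F3 Hr Hpr). Qed.

Lemma S5 i k : 0 < i -> i < k -> k < N -> p i <= v -> p k <= v -> p i < p k.
Proof.
move=> Hi0 Hik Hk Hpi Hpk.
have : p i != p k by apply: pneq; lia.
rewrite neq_ltn => /orP [//|Hki].
case: Hgood => H1 _ _; case: H1; exists 0, i, k; rewrite S1; split => //; lia.
Qed.

Lemma S2 : p 1 = 0.
Proof.
have [Hr1 Hz] := F2 (r:=0) ltac:(lia) S1.
have [c Hc Hpc] : exists2 c, c < N & p c = 0 by apply: Hsurj; lia.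
case: (ltngtP c 1) => Hc1.
- have E : c = 0 by lia.
  by move: Hpc; rewrite E S1.
- have := S5 (isT : 0 < 1) Hc1 Hc ltac:(lia) ltac:(lia); lia.
- by rewrite -Hc1.
Qed.

Variables (a b : nat).
Hypotheses (Ha : a < N) (Hpa : p a = v.+2) (Hb : b < N) (Hpb : p b = N.-1).

Lemma a_ge2 : 1 < a.
Proof.
case: (ltngtP a 1) => // H.
  have E : a = 0 by lia. by move: Hpa; rewrite E S1; lia.
by move: Hpa; rewrite H S2.
Qed.

Lemma b_lt : b < N.-1.
Proof.
rewrite ltn_neqAle -ltnS (ltn_predK Hb) Hb andbT.
by apply/eqP => E; move: Hpb; rewrite E Hlast; lia.
Qed.

Lemma S3 i : i < N -> (v.+2 <= p i) = (a <= i <= b).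
Proof.
move=> Hi; have Ha2 := a_ge2; have Hbl := b_lt.
apply/idP/idP.
  move=> Hpi; apply/andP; split.
    rewrite leqNgt; apply/negP => Hia.
    have := S6 Hia Ha ltac:(lia) ltac:(lia); lia.
  rewrite leqNgt; apply/negP => Hbi.
  have := S6 Hbi Hi ltac:(lia) ltac:(lia); have := Hlt Hi; lia.
move=> /andP [Hai Hib].
case: (ltngtP a i) => Hai'; last by rewrite -Hai' Hpa.
  case: (ltngtP i b) => Hib'; last by rewrite Hib' Hpb; lia.
    rewrite leqNgt; apply/negP => Hpi.
    have Hi0 : p i != v.+1 by rewrite -S1; apply: pneq; lia.
    have Hiv : p i != v by rewrite -Hlast; apply: pneq; lia.
    have Hi1 : p i != 0 by rewrite -S2; apply: pneq; lia.
    have Hab : p a != p b by apply: pneq; lia.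
    case: Hgood => _ H2 _; apply: H2.
    exists 1, a, i, b, N.-1; rewrite S2 Hpa Hpb Hlast; split; split; lia.
  lia.
lia.
Qed.
End Struct.

Definition g (N v j i : nat) : nat :=
  if i == 0 then v.+1
  else if i <= j then i.-1
  else if i <= j + (N - v.+2) then i - j + v + 1
  else i - (N - v.+1).

Section G.
Variables (N v j : nat).
Hypotheses (Hj1 : 0 < j) (Hjv : j <= v) (Hv : v.+2 < N).

Lemma G1 i : i < N -> g N v j i < N.
Proof. rewrite /g => Hi; do ![case: ifP => ?; try lia]. Qed.

Lemma G2 i k : i < N -> k < N -> g N v j i = g N v j k -> i = k.
Proof. rewrite /g => Hi Hk; do ![case: ifP => ?; try lia]. Qed.

Lemma G3 : g N v j N.-1 = v.
Proof. rewrite /g; do ![case: ifP => ?; try lia]. Qed.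

Lemma G4 : good (g N v j) N.
Proof.
split.
- move=> [i [i' [k [Hii Hik Hk Hki Hii']]]]; move: Hki Hii'.
  rewrite /g; do ![case: ifP => ?; try lia].
- move=> [i1 [i2 [i3 [i4 [i5 [[H12 H23 H34 H45 H5] [K13 K35 K52 K24]]]]]]].
  move: K13 K35 K52 K24; rewrite /g; do ![case: ifP => ?; try lia].
- move=> i k Hik Hk Hi1 [K1 K2 K3]; move: K1 K2 K3.
  rewrite /g; do ![case: ifP => ?; try lia].
Qed.
End G.

Lemma count_range lo hi N :
  count (fun x => lo <= x < hi) (iota 0 N) = minn hi N - lo.
Proof.
elim: N => [|N IH]; first by rewrite /= minn0.
rewrite -addn1 iotaD count_cat IH /= addn0 add0n.
case: (leqP lo N) => H1; case: (ltnP N hi) => H2 /=; lia.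
Qed.

Lemma card_range N lo hi : hi <= N ->
  #|[set x : 'I_N | lo <= x < hi]| = hi - lo.
Proof.
move=> Hh; rewrite cardsE cardE /enum_mem size_filter.
have -> : count (mem [pred x : 'I_N | lo <= x < hi]) (Finite.enum 'I_N)
        = count (fun x => lo <= x < hi) (map val (enum 'I_N)).
  by rewrite count_map enumT.
rewrite val_enum_ord count_range; lia.
Qed.

Lemma card_pre N (s : 'S_N) (A : {set 'I_N}) : #|[set i | s i \in A]| = #|A|.
Proof.
rewrite -(card_preimset A (@perm_inj _ s)); apply: eq_card => i.
by rewrite !inE.
Qed.

Lemma rank N (s : 'S_N) i : val (s i) = #|[set k | s k < s i]|.
Proof.
have -> : #|[set k | s k < s i]| = #|[set k | s k \in [set x : 'I_N | 0 <= x < s i]]|.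
  by apply: eq_card => k; rewrite !inE.
by rewrite card_pre card_range ?subn0 // ltnW.
Qed.

Lemma perm_ord_uniq N (s t : 'S_N) :
  (forall i k, (s i < s k) = (t i < t k)) -> s = t.
Proof.
move=> H; apply/permP => i; apply: val_inj; rewrite /= (rank s) (rank t).
by apply: eq_card => k; rewrite !inE H.
Qed.

Definition mkf N v j : {ffun 'I_N -> 'I_N} := [ffun i : 'I_N => insubd i (g N v j i)].
Definition mk N v j : 'S_N :=
  if injectiveP (mkf N v j) is ReflectT H then perm H else 1%g.

Lemma mkE N v j (i : 'I_N) : 0 < j -> j <= v -> v.+2 < N -> val (mk N v j i) = g N v j i.
Proof.
move=> H1 H2 H3.
have Hv : forall k : 'I_N, val (mkf N v j k) = g N v j k.
  by move=> k; rewrite ffunE val_insubd G1.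
rewrite /mk; case: injectiveP => [Hi|Hn].
  by rewrite permE Hv.
exfalso; apply: Hn => k1 k2 E; apply: val_inj; apply: (G2 H1 H2 H3 (ltn_ord k1) (ltn_ord k2)).
by rewrite -!Hv E.
Qed.

Lemma pf_mk N v j i : 0 < j -> j <= v -> v.+2 < N -> i < N -> pf (mk N v j) i = g N v j i.
Proof.
move=> H1 H2 H3 Hi; have := pfE (mk N v j) (Ordinal Hi).
by rewrite mkE.
Qed.

Section Rel.
Variables (N v : nat) (p : nat -> nat).
Hypothesis Hlt : forall i, i < N -> p i < N.
Hypothesis Hinj : forall i k, i < N -> k < N -> p i = p k -> i = k.
Hypothesis Hsurj : forall x, x < N -> exists2 i, i < N & p i = x.
Hypothesis Hgood : good p N.
Hypothesis Hlast : p N.-1 = v.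
Hypothesis Hv : v.+2 < N.
Variables (a b : nat).
Hypotheses (Ha : a < N) (Hpa : p a = v.+2) (Hb : b < N) (Hpb : p b = N.-1).
Hypothesis HS4 : b.+1 = a + (N - v.+2).

Lemma classify i : i < N ->
  [\/ i = 0 /\ p i = v.+1,
      [/\ 0 < i, (i < a) || (b < i) & p i <= v]
    | [/\ a <= i, i <= b & v.+2 <= p i]].
Proof.
move=> Hi.
have E := S3 Hlt Hinj Hsurj Hgood Hlast Hv Ha Hpa Hb Hpb Hi.
case: (posnP i) => Hi0.
  by apply: Or31; split => //; rewrite Hi0 (S1 Hlt Hinj Hsurj Hgood Hlast Hv).
case: (leqP v.+2 (p i)) => Hpi.
  by apply: Or33; move: E; rewrite Hpi => /esym /andP [? ?]; split.
apply: Or32; split => //.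
  by move: E; rewrite leqNgt Hpi /= => /esym /negbT; rewrite negb_and -!ltnNge.
have : p i != v.+1.
  by rewrite -(S1 Hlt Hinj Hsurj Hgood Hlast Hv); apply: (pneq Hinj); lia.
lia.
Qed.

Lemma relg i k : i < N -> k < N -> g N v a.-1 i < g N v a.-1 k -> p i < p k.
Proof.
move=> Hi Hk.
have Ha2 : 1 < a := a_ge2 Hlt Hinj Hsurj Hgood Hlast Hv Ha Hpa Hb Hpb.
have Hbl : b < N.-1 := b_lt Hlast Hv Ha Hpa Hb Hpb.
have T5 := S5 Hlt Hinj Hsurj Hgood Hlast Hv.
have T6 := S6 Hinj Hgood Hlast.
case: (classify Hi) => [[Ei Pi]|[Ei1 Ei2 Pi]|[Ei1 Ei2 Pi]];
case: (classify Hk) => [[Ek Pk]|[Ek1 Ek2 Pk]|[Ek1 Ek2 Pk]];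
rewrite /g; case: (ltngtP i k) => Hik;
do ![case: ifP => ?; try lia];
try (move=> _; apply: T5; lia); try (move=> _; apply: T6; lia).
Qed.
End Rel.

Lemma good_ext p q N : (forall i, i < N -> p i = q i) -> good q N -> good p N.
Proof.
move=> E [H1 H2 H3]; split.
- move=> [i [j [k [Hij Hjk Hk Hkj Hji]]]]; apply: H1; exists i, j, k.
  by rewrite -!E //; try lia; split.
- move=> [i1 [i2 [i3 [i4 [i5 [[H12 H23 H34 H45 H5] [K13 K35 K52 K24]]]]]]].
  apply: H2; exists i1, i2, i3, i4, i5; rewrite -!E //; try lia; split; split => //.
- move=> i j Hij Hj Hi1; rewrite !E //; try lia; exact: H3.
Qed.

Lemma count_v N v : v.+2 < N ->
  #|[set s : 'S_N | (s \in FF N) && (pf s N.-1 == v)]| = v.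
Proof.
move=> Hv.
pose J := [set j : 'I_N | 1 <= j < v.+1].
have HJ : #|J| = v by rewrite card_range; lia.
have Hinj : {in J &, injective (fun j : 'I_N => mk N v j)}.
  move=> j1 j2; rewrite !inE => /andP [H1 H1'] /andP [H2 H2'] E.
  apply: val_inj => /=.
  have := congr1 (fun s => pf s j1.+1) E => /=.
  rewrite !pf_mk; try lia.
  rewrite /g; do ![case: ifP => ?; try lia].
rewrite -[RHS]HJ -(card_in_imset Hinj); apply: eq_card => s; rewrite inE.
apply/idP/imsetP.
  move/andP => [/FsetP HF /eqP Hl].
  have Hlt := @pf_lt N s.
  have Hin := @pf_inj N s.
  have Hsu := @pf_surj N s.
  have [a Ha Hpa] : exists2 a, a < N & pf s a = v.+2 by apply: Hsu.
  have [b Hb Hpb] : exists2 b, b < N & pf s b = N.-1 by apply: Hsu; lia.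
  have E3 := S3 Hlt Hin Hsu HF Hl Hv Ha Hpa Hb Hpb.
  have Ha2 := a_ge2 Hlt Hin Hsu HF Hl Hv Ha Hpa Hb Hpb.
  have Hbl := b_lt Hl Hv Ha Hpa Hb Hpb.
  have Hab : a <= b by have := E3 a Ha; rewrite Hpa leqnn => /esym /andP [].
  have C1 : #|[set i : 'I_N | v.+2 <= s i]| = N - v.+2.
    rewrite -(@card_range N v.+2 N (leqnn N)) -(card_pre s [set x : 'I_N | v.+2 <= x < N]).
    by apply: eq_card => i; rewrite !inE ltn_ord andbT.
  have C2 : #|[set i : 'I_N | v.+2 <= s i]| = b.+1 - a.
    rewrite -(@card_range N a b.+1) //; apply: eq_card => i; rewrite !inE -pfE E3 //.
  have HS4 : b.+1 = a + (N - v.+2) by lia.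
  have Haj : a.-1 < N by lia.
  exists (Ordinal Haj); first by rewrite inE /=; lia.
  apply: perm_ord_uniq => i k; rewrite !mkE /=; try lia.
  rewrite -!pfE.
  have R := relg Hlt Hin Hsu HF Hl Hv Ha Hpa Hb Hpb HS4.
  apply/idP/idP => H; last exact: R.
  case: (ltngtP (g N v a.-1 i) (g N v a.-1 k)) => // H'.
    by have := R _ _ (ltn_ord k) (ltn_ord i) H'; lia.
  have E : nat_of_ord i = k by apply: (G2 (j:=a.-1) (v:=v) (N:=N)); try lia.
  by rewrite E ltnn in H.
move=> [j]; rewrite inE => /andP [Hj1 Hj2] ->.
apply/andP; split.
  apply/FsetP.
  apply: (@good_ext _ (g N v j)); first by move=> i Hi; rewrite pf_mk //; lia.
  apply: G4; lia.
by rewrite pf_mk ?G3 //; lia.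
Qed.

Lemma card_split n (A : {set 'S_n.+1}) :
  #|A| = \sum_(v < n.+1) #|[set s | (s \in A) & (s ord_max == v)]|.
Proof.
rewrite -sum1_card (partition_big (fun s : 'S_n.+1 => s ord_max) predT) //=.
apply: eq_bigr => v _; rewrite -sum1_card; apply: eq_bigl => s.
by rewrite !inE.
Qed.

Lemma fiber_top n (v : 'I_n.+1) : n.-1 <= v ->
  #|[set s : 'S_n.+1 | (s \in FF n.+1) & (s ord_max == v)]| = #|FF n|.
Proof.
move=> Hv; rewrite (card_fiber (mem (FF n.+1))).
apply: eq_card => t; rewrite in_set -(lift_good t Hv); by [].
Qed.

Lemma recur m : #|FF m.+2| = 2 * #|FF m.+1| + 'C(m, 2).
Proof.
rewrite card_split big_ord_recr big_ord_recr /=.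
rewrite !fiber_top /=; try lia.
rewrite -bin2_sum big_mkord.
have -> : \sum_(i < m) #|[set s : 'S_m.+2 | (s \in FF m.+2) &
              (s ord_max == widen_ord (leqnSn m.+1) (widen_ord (leqnSn m) i))]|
        = \sum_(i < m) i.
  apply: eq_bigr => i _.
  rewrite -(@count_v m.+2 i); last by have := ltn_ord i; lia.
  apply: eq_card => s; rewrite !inE.
  have -> : pf s m.+1 = val (s ord_max) by rewrite -(pfE s ord_max).
  by [].
lia.
Qed.

Lemma base : #|FF 1| = 1.
Proof.
have -> : #|FF 1| = #|'S_1|.
  apply: eq_card => s; rewrite inE /=.
  have : good (pf s) 1.
    split.
    - by move=> [i [j [k [? ? ? _ _]]]]; lia.
    - by move=> [i1 [i2 [i3 [i4 [i5 [[? ? ? ? ?] _]]]]]]; lia.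
    - by move=> i j ? ? ?; lia.
  by move/FsetP; rewrite inE.
by rewrite card_Sn.
Qed.

Theorem mainTheorem16 (n : nat) :
  (1 <= n)%N ->
  #|Fset n [:: [:: 3; 2; 1]; [:: 1; 4; 2; 5; 3]]| + 'C(n, 2) + 1 = 2 ^ n.
Proof.
case: n => [//|m] _.
elim: m => [|m IH]; first by rewrite base.
have E2 : 'C(m.+1, 2) = 'C(m, 2) + m by rewrite binS bin1.
have E1 : 'C(m.+2, 2) = 'C(m.+1, 2) + m.+1 by rewrite binS bin1.
rewrite recur E1 E2 expnS; move: IH; rewrite E2; lia.
Qed.
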